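(* For $n\ge2$, with $\widetilde Q_n$, $\Sigma^2$, $\iota$, $f_n$, $f_{n+1}$ and $\epsilon_n$ as in the context, $$\iota_*\circ\Sigma^2\,[f_n\circ\epsilon_n]\;=\;[f_{n+1}\circ\epsilon_{n+1}]\quad\text{in }\pi_{2n+1}(\widetilde Q_{n+1}),$$ where $\epsilon_{n+1}:=\Sigma^2\epsilon_n$.
   Context: $\widetilde Q_n=\{(a,b)\in\mathbb R^{2n}\oplus\mathbb R^{2n}: |a|=|b|=1,\ \langle a,b\rangle=0\}$. For $S\subset V$, $\Sigma^2S=\{(\sqrt{1-|X|^2}\,v,X): v\in S, X\in\mathbb R^2,|X|\le1\}\subset V\oplus\mathbb R^2$, and for $f\colon P\to S$ with $P\subset U$, $\Sigma^2f(\sqrt{1-|X|^2}u,X)=(\sqrt{1-|X|^2}f(u),X)$. $j_+$ is the orientation-compatible orthogonal complex structure on $\mathbb R^2$, and $\iota\colon\Sigma^2\widetilde Q_n\to\widetilde Q_{n+1}$ is $(\sqrt{1-|X|^2}(a,b),X)\mapsto\big((\sqrt{1-|X|^2}a,X),(\sqrt{1-|X|^2}b,-j_+X)\big)$. Fix a unit vector $a\in\mathbb R^{2n}$; $f_n\colon S(a^\perp)\cong S^{2n-2}\to\widetilde Q_n$, $b\mapsto(a,b)$, is the inclusion of a fibre of $(a,b)\mapsto a$, and $f_{n+1}\colon S((a,0)^\perp)\to\widetilde Q_{n+1}$, $c\mapsto((a,0),c)$, where $S((a,0)^\perp)=S(a^\perp\oplus\mathbb R^2)=\Sigma^2S(a^\perp)$.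 $\epsilon_n$ is a generator of $\pi_{2n-1}(S(a^\perp))\cong\pi_{2n-1}(S^{2n-2})$ ($\cong\mathbb Z$ for $n=2$, $\mathbb Z/2$ for $n>2$), and $\epsilon_{n+1}=\Sigma^2\epsilon_n\in\pi_{2n+1}(S((a,0)^\perp))$. *)

(* Defs.v *)
From HB Require Import structures.
From mathcomp Require Import all_boot all_order all_algebra.
From mathcomp Require Import all_classical all_reals all_analysis.
Set Implicit Arguments. Unset Strict Implicit. Unset Printing Implicit Defensive.
Import Order.TTheory GRing.Theory Num.Theory numFieldNormedType.Exports.
Local Open Scope classical_set_scope.
Local Open Scope ring_scope.

Definition dotv (R : realType) (d : nat) (u v : 'rV[R]_d) : R :=
  \sum_(i < d) u 0 i * v 0 i.
Definition sqnorm (R : realType) (d : nat) (u : 'rV[R]_d) : R := dotv u u.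

Definition sphere (R : realType) (d : nat) : set 'rV[R]_d :=
  [set u | sqnorm u = 1].

Definition perp_sphere (R : realType) (d : nat) (a : 'rV[R]_d) : set 'rV[R]_d :=
  [set b | sqnorm b = 1 /\ dotv a b = 0].

(* \widetilde Q over R^d ⊕ R^d (the paper's \widetilde Q_n is Qt (2*n)) *)
Definition Qt (R : realType) (d : nat) : set ('rV[R]_d * 'rV[R]_d) :=
  [set p | sqnorm p.1 = 1 /\ sqnorm p.2 = 1 /\ dotv p.1 p.2 = 0].

Definition sfac (R : realType) (X : 'rV[R]_2) : R := Num.sqrt (1 - sqnorm X).

Definition Sigma2 (R : realType) (V : lmodType R) (S : set V) : set (V * 'rV[R]_2) :=
  [set y | exists v X, S v /\ sqnorm X <= 1 /\ y = (sfac X *: v, X)].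

(* Sigma^2 f : (sqrt(1-|X|^2) u, X) |-> (sqrt(1-|X|^2) f(u), X).
   On a point (w, X) of Sigma^2 P with sqrt(1-|X|^2) <> 0 one has u = w / s;
   when s = 0 the value is (0, X) whatever u is (and s^-1 = 0 by convention). *)
Definition Sigma2f (R : realType) (U V : lmodType R) (f : U -> V)
  (y : U * 'rV[R]_2) : V * 'rV[R]_2 :=
  (sfac y.2 *: f ((sfac y.2)^-1 *: y.1), y.2).

Definition jplus (R : realType) (X : 'rV[R]_2) : 'rV[R]_2 :=
  \row_(i < 2) (if i == ord0 then - X 0 ord_max else X 0 ord0).

Definition iotaQ (R : realType) (d : nat) (y : ('rV[R]_d * 'rV[R]_d) * 'rV[R]_2)
  : 'rV[R]_(d + 2) * 'rV[R]_(d + 2) :=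
  (row_mx y.1.1 y.2, row_mx y.1.2 (- jplus y.2)).

Definition fib_incl (R : realType) (d : nat) (a : 'rV[R]_d) (b : 'rV[R]_d)
  : 'rV[R]_d * 'rV[R]_d := (a, b).

Definition vsum (R : realType) (d : nat) (y : 'rV[R]_d * 'rV[R]_2) : 'rV[R]_(d + 2) :=
  row_mx y.1 y.2.

Definition based_homotopic (R : realType) (T U : topologicalType)
  (D : set T) (Y : set U) (x0 : T) (g h : T -> U) : Prop :=
  exists H : R * T -> U,
    {within `[0, 1]%classic `*` D, continuous H} /\
    (forall t x, `[0, 1]%classic t -> D x -> Y (H (t, x))) /\
    (forall x, D x -> H (0, x) = g x) /\
    (forall x, D x -> H (1, x) = h x) /\
    (forall t, `[0, 1]%classic t -> H (t, x0) = g x0).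

Arguments sphere R d : clear implicits.
Arguments Qt R d : clear implicits.
Arguments based_homotopic R {T U} D Y x0 g h.

(* Main.v *)
Require Import Defs.
From HB Require Import structures.
From mathcomp Require Import all_boot all_order all_algebra.
From mathcomp Require Import all_classical all_reals all_analysis.
From mathcomp Require Import ring lra.
Import Order.TTheory GRing.Theory Num.Theory numFieldNormedType.Exports.
Local Open Scope classical_set_scope.
Local Open Scope ring_scope.

Lemma cvg_mx (R : realType) {T : Type} (F : set_system T) {FF : Filter F} m k
  (f : T -> 'M[R]_(m, k)) (M : 'M[R]_(m, k)) :
  (forall i j, (fun x => f x i j) @ F --> M i j) -> f @ F --> M.
Proof.
move=> h A [P hP sPA].
have : \forall x \near F, forall i j, P i j (f x i j).
  apply: filter_forall => i; apply: filter_forall => j.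
  exact: (h i j _ (hP i j)).
by apply: filterS => x hx; apply: sPA.
Qed.

Section CvgLemmas.
Variables (R : realType) (T : Type) (F : set_system T).
Context {FF : Filter F}.

Lemma cvg_coord m k (f : T -> 'M[R]_(m, k)) (M : 'M[R]_(m, k)) i j :
  f @ F --> M -> (fun x => f x i j) @ F --> M i j.
Proof. by move=> h; exact: (@continuous_cvg _ _ _ F _ f (fun N : 'M[R]_(m, k) => N i j) M (@coord_continuous _ m k i j M) h). Qed.

Lemma cvg_row_mx m k1 k2 (f : T -> 'M[R]_(m, k1)) (g : T -> 'M[R]_(m, k2)) (u : 'M[R]_(m, k1)) (v : 'M[R]_(m, k2)) :
  f @ F --> u -> g @ F --> v -> (fun x => row_mx (f x) (g x)) @ F --> row_mx u v.
Proof.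
move=> hf hg; apply: cvg_mx => i j; rewrite mxE.
under eq_cvg do rewrite mxE.
by case: splitP => k _; apply: cvg_coord.
Qed.

Lemma cvg_dotv k (f g : T -> 'rV[R]_k) (u v : 'rV[R]_k) :
  f @ F --> u -> g @ F --> v -> (fun x => dotv (f x) (g x)) @ F --> dotv u v.
Proof.
move=> hf hg; rewrite /dotv.
apply: (@cvg_big R^o _ +%R 0 xpredT _ T F _ (fun i x => f x 0 i * g x 0 i)).
  exact: add_continuous.
by move=> i _; apply: cvgM; apply: cvg_coord.
Qed.

Lemma cvg_jplus (f : T -> 'rV[R]_2) (X : 'rV[R]_2) :
  f @ F --> X -> (fun x => jplus (f x)) @ F --> jplus X.
Proof.
move=> hf; apply: cvg_mx => i j; rewrite mxE.
under eq_cvg do rewrite mxE.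
by case: ifP => _; [apply: cvgN|]; apply: cvg_coord.
Qed.

End CvgLemmas.

Lemma cvg_to_within {T : Type} {U : topologicalType} (F : set_system T) {FF : Filter F}
  (f : T -> U) (A : set U) (x : U) :
  f @ F --> x -> (\forall y \near F, A (f y)) -> f @ F --> within A (nbhs x).
Proof.
move=> hf hA P hP; have := hf _ hP => /= h.
by apply: filterS2 hA h => y Ay; apply.
Qed.

Lemma cvg_sfac (R : realType) {T : Type} (F : set_system T) {FF : Filter F}
  (f : T -> 'rV[R]_2) (X : 'rV[R]_2) :
  f @ F --> X -> (fun x => sfac (f x)) @ F --> sfac X.
Proof.
move=> hf; rewrite /sfac.
apply: (@continuous_cvg _ _ _ F _ (fun x => 1 - sqnorm (f x)) (@Num.sqrt R)).
  exact: sqrt_continuous.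
by apply: cvgB; [apply: cvg_cst | apply: cvg_dotv].
Qed.

Lemma sphere_norm (R : realType) k (v : 'rV[R]_k) : sphere R k v -> `|v| <= 1.
Proof.
move=> sv; rewrite [leLHS]/Num.Def.normr/= mx_normrE.
apply: bigmax_le => // -[i j] _ /=.
have h : v i j ^+ 2 <= 1.
  rewrite -sv /sphere /sqnorm /dotv (bigD1 j) //= ord1 -expr2 lerDl.
  by apply: sumr_ge0 => l _; rewrite -expr2 sqr_ge0.
have : `|v i j| ^+ 2 <= 1 by rewrite real_normK // num_real.
by rewrite -[leRHS](expr1n _ 2) ler_pXn2r // ?nnegrE // normr_ge0.
Qed.

Lemma cvg_fst_nbhs {U V : topologicalType} (y : U * V) : fst @ nbhs y --> y.1.
Proof. exact: cvg_fst. Qed.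
Lemma cvg_snd_nbhs {U V : topologicalType} (y : U * V) : snd @ nbhs y --> y.2.
Proof. exact: cvg_snd. Qed.

Section Alg.
Variable R : realType.

Lemma dotvC {d} (u v : 'rV[R]_d) : dotv u v = dotv v u.
Proof. by apply: eq_bigr => i _; rewrite mulrC. Qed.

Lemma dotvDl {d} (u v w : 'rV[R]_d) : dotv (u + v) w = dotv u w + dotv v w.
Proof. by rewrite /dotv -big_split; apply: eq_bigr => i _; rewrite mxE mulrDl. Qed.

Lemma dotvZl {d} k (u w : 'rV[R]_d) : dotv (k *: u) w = k * dotv u w.
Proof. by rewrite /dotv mulr_sumr; apply: eq_bigr => i _; rewrite mxE mulrA. Qed.

Lemma dotvNl {d} (u w : 'rV[R]_d) : dotv (- u) w = - dotv u w.
Proof. by rewrite -scaleN1r dotvZl mulN1r. Qed.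

Lemma dotvDr {d} (u v w : 'rV[R]_d) : dotv w (u + v) = dotv w u + dotv w v.
Proof. by rewrite dotvC dotvDl !(dotvC w). Qed.

Lemma dotvZr {d} k (u w : 'rV[R]_d) : dotv w (k *: u) = k * dotv w u.
Proof. by rewrite dotvC dotvZl dotvC. Qed.

Lemma dotvNr {d} (u w : 'rV[R]_d) : dotv w (- u) = - dotv w u.
Proof. by rewrite dotvC dotvNl dotvC. Qed.

Lemma dotv0l {d} (w : 'rV[R]_d) : dotv 0 w = 0.
Proof. by rewrite /dotv big1 // => i _; rewrite mxE mul0r. Qed.

Lemma dotv_row_mx {d1 d2} (u1 v1 : 'rV[R]_d1) (u2 v2 : 'rV[R]_d2) :
  dotv (row_mx u1 u2) (row_mx v1 v2) = dotv u1 v1 + dotv u2 v2.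
Proof.
rewrite /dotv big_split_ord /=; congr (_ + _); apply: eq_bigr => i _.
  by rewrite !row_mxEl.
by rewrite !row_mxEr.
Qed.

Lemma sqnorm_ge0 {d} (u : 'rV[R]_d) : 0 <= sqnorm u.
Proof. by apply: sumr_ge0 => i _; rewrite -expr2 sqr_ge0. Qed.

Lemma sqnorm0 {d} : sqnorm (0 : 'rV[R]_d) = 0.
Proof. exact: dotv0l. Qed.

Lemma ord_max2 : (lift ord0 ord0 : 'I_2) = ord_max.
Proof. by apply/val_inj. Qed.

Lemma dotv_jplus (X : 'rV[R]_2) : dotv X (jplus X) = 0.
Proof.
rewrite /dotv !big_ord_recl big_ord0 /jplus !mxE /= ord_max2.

ring.
Qed.

Lemma sqnorm_jplus (X : 'rV[R]_2) : sqnorm (jplus X) = sqnorm X.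
Proof.
rewrite /sqnorm /dotv !big_ord_recl !big_ord0 /jplus !mxE /= ord_max2.
ring.
Qed.

Lemma sqnormZ {d} k (u : 'rV[R]_d) : sqnorm (k *: u) = k ^+ 2 * sqnorm u.
Proof. by rewrite /sqnorm dotvZl dotvZr mulrA expr2. Qed.

Lemma sfac0 : sfac (0 : 'rV[R]_2) = 1.
Proof. by rewrite /sfac sqnorm0 subr0 sqrtr1. Qed.

Lemma jplus0 : jplus (0 : 'rV[R]_2) = 0.
Proof. by apply/rowP => i; rewrite !mxE; case: ifP => _; rewrite ?oppr0. Qed.

End Alg.

Section Main.
Variables (R : realType) (d : nat) (a : 'rV[R]_d) (eps : 'rV[R]_d -> 'rV[R]_d).
Hypothesis ha : sqnorm a = 1.
Hypothesis heps_maps : forall u, sphere R d u -> perp_sphere a (eps u).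

Definition Ef (y : 'rV[R]_d * 'rV[R]_2) : 'rV[R]_d :=
  sfac y.2 *: eps ((sfac y.2)^-1 *: y.1).

Lemma Ef_prop y : Sigma2 (sphere R d) y ->
  [/\ sqnorm (Ef y) = 1 - sqnorm y.2, dotv a (Ef y) = 0 & sqnorm y.2 <= 1].
Proof.
case=> v [X [sv [hX ->]]] /=; rewrite /Ef /=.
have h1 : 0 <= 1 - sqnorm X by rewrite subr_ge0.
have [s0|s0] := eqVneq (sfac X) 0.
  rewrite s0 !scale0r sqnorm0 /dotv big1 ?split //; last by move=> i _; rewrite mxE mulr0.
  move: s0; rewrite /sfac => /eqP; rewrite sqrtr_eq0 => h2.
  by split => //; apply/eqP; rewrite eq_le h1 h2.
rewrite scalerK //; have [e1 e2] := heps_maps _ sv; split => //.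
  by rewrite sqnormZ e1 mulr1 /sfac sqr_sqrtr.
by rewrite dotvZr e2 mulr0.
Qed.

Definition lamf (t : R) := 1 - t.
Definition cf (t : R) := (1 - t ^+ 2) / (1 + t ^+ 2).
Definition muf (t : R) := (2 * t) / (1 + t ^+ 2).
Definition alf (t : R) (X : 'rV[R]_2) := Num.sqrt (1 - lamf t ^+ 2 * sqnorm X).

Definition Hp (z : R * ('rV[R]_d * 'rV[R]_2)) : 'rV[R]_(d + 2) * 'rV[R]_(d + 2) :=
  (row_mx (alf z.1 z.2.2 *: a) (lamf z.1 *: z.2.2),
   row_mx ((- (lamf z.1 * muf z.1 * sqnorm z.2.2)) *: a + Ef z.2)
          (cf z.1 *: (- jplus z.2.2) + (muf z.1 * alf z.1 z.2.2) *: z.2.2)).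

Lemma cmu t : cf t ^+ 2 + muf t ^+ 2 = 1.
Proof.
rewrite /cf /muf; have h : 1 + t ^+ 2 != 0.
  by rewrite gt_eqF // ltr_pwDl // sqr_ge0.
by field.
Qed.

Lemma Qt_alg (E : 'rV[R]_d) (X J : 'rV[R]_2) (al lam c mu : R) :
  dotv E E = 1 - dotv X X -> dotv a E = 0 -> dotv X J = 0 -> dotv J J = dotv X X ->
  al ^+ 2 = 1 - lam ^+ 2 * dotv X X -> c ^+ 2 + mu ^+ 2 = 1 ->
  Qt R (d + 2) (row_mx (al *: a) (lam *: X),
   row_mx ((- (lam * mu * dotv X X)) *: a + E) (c *: (- J) + (mu * al) *: X)).
Proof.
move=> e1 e2 djX sjX hal hcm.
have djX' : dotv J X = 0 by rewrite dotvC.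
have aE : dotv E a = 0 by rewrite dotvC.
have ha' : dotv a a = 1 := ha.
rewrite /Qt /sqnorm /=; split; [|split].
- rewrite dotv_row_mx !(dotvZl, dotvZr) ha'.
  have -> : al * (al * 1) = al ^+ 2 by ring.
  rewrite hal; ring.
- rewrite dotv_row_mx !(dotvDl, dotvDr, dotvZl, dotvZr, dotvNl, dotvNr).
  rewrite ha' e1 e2 aE djX djX' sjX.
  apply/eqP; rewrite -subr_eq0; apply/eqP.
  transitivity (mu ^+ 2 * dotv X X * (al ^+ 2 - (1 - lam ^+ 2 * dotv X X)) + dotv X X * (c ^+ 2 + mu ^+ 2 - 1)); first ring.
  by rewrite hal hcm; ring.
- rewrite dotv_row_mx !(dotvDl, dotvDr, dotvZl, dotvZr, dotvNl, dotvNr).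
  rewrite ha' e2 djX; ring.
Qed.

Lemma Hp_in t y : 0 <= t <= 1 -> Sigma2 (sphere R d) y -> Qt R (d + 2) (Hp (t, y)).
Proof.
move=> /andP[t0 t1] Dy; have [e1 e2 hX] := Ef_prop _ Dy.
have nX0 : 0 <= sqnorm y.2 by apply: sqnorm_ge0.
have hal : alf t y.2 ^+ 2 = 1 - lamf t ^+ 2 * sqnorm y.2.
  rewrite /alf sqr_sqrtr // subr_ge0 /lamf.
  have q1 : 0 <= (1 - t) ^+ 2 by apply: sqr_ge0.
  have q2 : (1 - t) ^+ 2 <= 1 by rewrite expr2; nra.
  by apply: (le_trans (ler_wpM2l q1 hX)); rewrite mulr1.
apply: Qt_alg => //; [exact: dotv_jplus | exact: sqnorm_jplus | exact: cmu].
Qed.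

Hypothesis heps_cont : {within sphere R d, continuous eps}.

Lemma sfac_ge0 (X : 'rV[R]_2) : 0 <= sfac X.
Proof. exact: sqrtr_ge0. Qed.

Lemma Ef_norm y : Sigma2 (sphere R d) y -> `|Ef y| <= sfac y.2.
Proof.
case=> v [X [sv [hX ->]]] /=; rewrite /Ef /=.
have [s0|s0] := eqVneq (sfac X) 0.
  by rewrite s0 !scale0r normr0.
rewrite scalerK // normrZ ger0_norm ?sfac_ge0 //.
have [e1 _] := heps_maps _ sv.
by rewrite -[leRHS]mulr1 ler_wpM2l ?sfac_ge0 // sphere_norm.
Qed.

Lemma Ef_cont y : Sigma2 (sphere R d) y ->
  Ef @ within (Sigma2 (sphere R d)) (nbhs y) --> Ef y.
Proof.
move=> Dy.
set G := within (Sigma2 (sphere R d)) (nbhs y).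
have GD : \forall y' \near G, Sigma2 (sphere R d) y'.
  exact: withinT.
have h1 : fst @ G --> y.1 by apply: cvg_within_filter; apply: cvg_fst_nbhs.
have h2 : snd @ G --> y.2 by apply: cvg_within_filter; apply: cvg_snd_nbhs.
have hs : (fun y' => sfac y'.2) @ G --> sfac y.2 by apply: cvg_sfac.
have [s0|s0] := eqVneq (sfac y.2) 0.
  have -> : Ef y = 0 by rewrite /Ef s0 scale0r.
  apply/cvgr0Pnorm_lt => e e0.
  move: hs; rewrite s0 => /cvgr0Pnorm_lt /(_ e e0) hs.
  apply: filterS2 GD hs => y' Dy' hy'.
  apply: le_lt_trans (Ef_norm _ Dy') _.
  by apply: le_lt_trans hy'; apply: ler_norm.
set vf := fun y' : 'rV[R]_d * 'rV[R]_2 => (sfac y'.2)^-1 *: y'.1.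
have hv : vf @ G --> vf y.
  by apply: cvgZ => //; apply: cvgV.
have sph : forall y', Sigma2 (sphere R d) y' -> sfac y'.2 != 0 -> sphere R d (vf y').
  move=> y' [v [X [sv [hX ->]]]] /= sX; rewrite /vf /= scalerK //.
have hne : \forall y' \near G, sfac y'.2 != 0 by apply: (cvgr_neq0 _ hs s0).
have hv' : vf @ G --> within (sphere R d) (nbhs (vf y)).
  apply: cvg_to_within => //.
  by apply: filterS2 GD hne => y' Dy' ne; apply: sph.
have he : (eps \o vf) @ G --> eps (vf y).
  apply: cvg_comp hv' _.
  by move/subspace_continuousP: heps_cont; apply; apply: sph.
exact: (cvgZ hs he).
Qed.

Section Scal.
Variables (T : Type) (F : set_system T).
Context {FF : Filter F}.
Variables (g : T -> R) (t0 : R) (h : T -> 'rV[R]_2) (X0 : 'rV[R]_2).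
Hypotheses (hg : g @ F --> t0) (hh : h @ F --> X0).

Lemma cvg_sq : (fun x => g x ^+ 2) @ F --> t0 ^+ 2.
Proof. by under eq_cvg do rewrite expr2; rewrite expr2; apply: cvgM. Qed.

Lemma den_neq0 (t : R) : 1 + t ^+ 2 != 0.
Proof. by rewrite gt_eqF // ltr_pwDl // sqr_ge0. Qed.

Lemma cvg_lamf : (fun x => lamf (g x)) @ F --> lamf t0.
Proof. by apply: cvgB => //; apply: cvg_cst. Qed.

Lemma cvg_cf : (fun x => cf (g x)) @ F --> cf t0.
Proof.
apply: cvgM; first by apply: cvgB; [apply: cvg_cst | apply: cvg_sq].
by apply: cvgV; [apply: den_neq0 | apply: cvgD; [apply: cvg_cst | apply: cvg_sq]].
Qed.

Lemma cvg_muf : (fun x => muf (g x)) @ F --> muf t0.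
Proof.
apply: cvgM; first by apply: cvgM => //; apply: cvg_cst.
by apply: cvgV; [apply: den_neq0 | apply: cvgD; [apply: cvg_cst | apply: cvg_sq]].
Qed.

Lemma cvg_alf : (fun x => alf (g x) (h x)) @ F --> alf t0 X0.
Proof.
rewrite /alf.
apply: (@continuous_cvg _ _ _ F _ (fun x => 1 - lamf (g x) ^+ 2 * sqnorm (h x)) (@Num.sqrt R)).
  exact: sqrt_continuous.
apply: cvgB; first by apply: cvg_cst.
apply: cvgM; last by apply: cvg_dotv.
under eq_cvg do rewrite expr2; rewrite expr2.
by apply: cvgM; apply: cvg_lamf.
Qed.

End Scal.

Lemma Hp_cont : {within `[0, 1]%classic `*` Sigma2 (sphere R d), continuous Hp}.
Proof.
apply/subspace_continuousP => z Dz.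
set G := within (`[0, 1]%classic `*` Sigma2 (sphere R d)) (nbhs z).
have GD : \forall z' \near G, (`[0, 1]%classic `*` Sigma2 (sphere R d)) z'.
  exact: withinT.
have ht : fst @ G --> z.1 by apply: cvg_within_filter; apply: cvg_fst_nbhs.
have hy : snd @ G --> z.2 by apply: cvg_within_filter; apply: cvg_snd_nbhs.
have hX : (fun z' => z'.2.2) @ G --> z.2.2.
  exact: (@continuous_cvg _ _ _ G _ snd snd z.2 (@cvg_snd_nbhs _ _ z.2) hy).
have hy' : snd @ G --> within (Sigma2 (sphere R d)) (nbhs z.2).
  apply: cvg_to_within => //.
  by apply: filterS GD => z' [].
have hE : (fun z' => Ef z'.2) @ G --> Ef z.2.
  by apply: cvg_comp hy' _; apply: Ef_cont; case: Dz.
apply: (@cvg_pair _ _ _ G (nbhs (Hp z).1) (nbhs (Hp z).2) _ _ _ (fun z' => (Hp z').1) (fun z' => (Hp z').2)); rewrite /Hp /=; apply: cvg_row_mx.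
- by apply: cvgZ; [apply: cvg_alf | apply: cvg_cst].
- by apply: cvgZ => //; apply: cvg_lamf.
- apply: cvgD => //; apply: cvgZ; last by apply: cvg_cst.
  apply: cvgN; apply: cvgM; last by apply: cvg_dotv.
  by apply: cvgM; [apply: cvg_lamf | apply: cvg_muf].
- apply: cvgD; apply: cvgZ => //.
  + by apply: cvg_cf.
  + by apply: cvgN; apply: cvg_jplus.
  + by apply: cvgM; [apply: cvg_muf | apply: cvg_alf].
Qed.

End Main.

Theorem lemmaA2 (R : realType) (n : nat) (hn : (2 <= n)%N)
  (a : 'rV[R]_(2 * n)) (ha : sqnorm a = 1)
  (eps : 'rV[R]_(2 * n) -> 'rV[R]_(2 * n))
  (heps_cont : {within sphere R (2 * n), continuous eps})
  (heps_maps : forall u, sphere R (2 * n) u -> perp_sphere a (eps u))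
  (u0 : 'rV[R]_(2 * n)) (hu0 : sphere R (2 * n) u0) :
  based_homotopic R
    (Sigma2 (sphere R (2 * n)))             (* S^{2n+1} = Sigma^2 S^{2n-1} *)
    (Qt R (2 * n + 2))                      (* \widetilde Q_{n+1} *)
    (u0, 0)                                 (* base point *)
    (fun y => iotaQ (Sigma2f (fun u => fib_incl a (eps u)) y))   (* iota_* Sigma^2 (f_n o eps_n) *)
    (fun y => fib_incl (vsum (a, 0)) (vsum (Sigma2f eps y))).
                                            (* f_{n+1} o eps_{n+1} *)
Proof.
exists (@Hp R (2 * n) a eps); split; first by apply: Hp_cont.
split.
  move=> t x; rewrite /= in_itv /= => ht Dx.
  by apply: Hp_in.
have l0 : @lamf R 0 = 1 by rewrite /lamf subr0.
have c0 : @cf R 0 = 1 by rewrite /cf expr0n /= subr0 addr0 divr1.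
have m0 : @muf R 0 = 0 by rewrite /muf mulr0 mul0r.
have l1 : @lamf R 1 = 0 by rewrite /lamf subrr.
have c1 : @cf R 1 = 0 by rewrite /cf expr1n subrr mul0r.
have m1 : @muf R 1 = 1 by rewrite /muf expr1n mulr1 divff.
split.
  move=> x _; rewrite /Hp /iotaQ /Sigma2f /fib_incl /Ef /= l0 c0 m0.
  rewrite /alf l0 expr1n mul1r -/(sfac _) !scale1r mulr0 mul0r oppr0 scale0r add0r.
  by rewrite mul0r scale0r addr0.
split.
  move=> x _; rewrite /Hp /vsum /Sigma2f /fib_incl /Ef /= l1 c1 m1.
  have a1 : forall X, alf R 1 X = 1 by move=> X; rewrite /alf l1 expr0n mul0r subr0 sqrtr1.
  by rewrite a1 scale1r !mul0r oppr0 !scale0r !add0r mul1r scale1r.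
move=> t _; rewrite /Hp /iotaQ /Sigma2f /fib_incl /Ef /= /alf sqnorm0 mulr0 subr0 sqrtr1.
by rewrite sfac0 !scale1r !scaler0 mulr0 oppr0 scale0r add0r jplus0 oppr0 !scaler0 addr0.
Qed.
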